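(* Let $\mathcal G=(V_{\min},V_{\max},E,w,\lambda)$ be a discounted payoff game, $\sigma$ a joint strategy, and $\nu$ a basis valuation of $H$ minimising $f_\sigma$ over all solutions of $H$. Assume there are no local improvements of $\sigma$ for $\nu$, i.e. $\mathsf{offset}(\nu,(v,v'))\ge\mathsf{offset}(\nu,(v,\sigma(v)))$ for all $(v,v')\in E$. Let $E'$ be any set of edges with $E_\nu\subseteq E'\subseteq S^\sigma_\nu$ that contains an outgoing edge of every vertex. If $\nu$ does not define strategies for both players, then there is a joint strategy $\sigma'$ that is better than $\sigma$ and satisfies $(v,\sigma'(v))\in E'$ for all $v\in V$.
   Context: A discounted payoff game is a tuple $\mathcal G=(V_{\min},V_{\max},E,w,\lambda)$ with $V=V_{\min}\cup V_{\max}$ finite (disjoint union of Min and Max vertices), $E\subseteq V\times V$ with every vertex having an outgoing edge, $w:E\to\mathbb R$, $\lambda:E\to[0,1)$. A joint strategy is a map $\sigma:V\to V$ with $(v,\sigma(v))\in E$ for all $v$. $H$ is the system of inequations over $x\in\mathbb R^V$ containing, for each edge $e=(v,v')$, the inequation $I_e$: $x(v)\ge w_e+\lambda_e x(v')$ if $v\in V_{\max}$ and $x(v)\le w_e+\lambda_e x(v')$ if $v\in V_{\min}$. A basis of $H$ is a set of $|V|$ inequations of $H$ whose equality versions have a unique common solution; if that solution satisfies $H$ it is the basis valuation. $\mathsf{offset}(x,(v,v'))=x(v)-(w_{(v,v')}+\lambda_{(v,v')}x(v'))$ if $v\in V_{\max}$, and $(w_{(v,v')}+\lambda_{(v,v')}x(v'))-x(v)$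 otherwise; $f_\sigma(x)=\sum_{v\in V}\mathsf{offset}(x,(v,\sigma(v)))$. $S^\sigma_\nu=\{(v,v')\in E\mid \mathsf{offset}(\nu,(v,v'))=\mathsf{offset}(\nu,(v,\sigma(v)))\}$ (stale edges) and $E_\nu=\{(v,v')\in E\mid\mathsf{offset}(\nu,(v,v'))=0\}$. A valuation $x$ defines strategies for both players if every vertex $v$ has an outgoing edge $e$ with $I_e$ holding with equality at $x$. A joint strategy $\sigma'$ is better than $\sigma$ iff $\min\{f_{\sigma'}(x)\mid x \text{ solves } H\}<\min\{f_{\sigma}(x)\mid x\text{ solves } H\}$. *)

(* Defs.v *)
From HB Require Import structures.
From mathcomp Require Import all_boot all_order all_algebra.
From mathcomp Require Import boolp classical_sets reals.
Set Implicit Arguments. Unset Strict Implicit. Unset Printing Implicit Defensive.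
Import Order.TTheory GRing.Theory Num.Theory.
Local Open Scope ring_scope.
Local Open Scope classical_set_scope.

(* A discounted payoff game on a finite vertex set V:
   - isMax v : v is a Max vertex (V_max); otherwise v is a Min vertex (V_min),
     so V is the disjoint union of V_min and V_max;
   - E : rel V is the edge relation;
   - w, lam : V -> V -> R give weight and discount of each edge (only their
     values on edges matter). *)
Section Game.
Variables (R : realType) (V : finType) (isMax : pred V) (E : rel V)
          (w lam : V -> V -> R).

Definition game_ok : Prop :=
  (forall v, exists v', E v v') /\
  (forall v v', E v v' -> 0 <= lam v v' /\ lam v v' < 1).

Definition joint_strategy (s : V -> V) : Prop := forall v, E v (s v).

Definition ineq_holds (x : V -> R) (v v' : V) : Prop :=
  if isMax v then x v >= w v v' + lam v v' * x v'
  else x v <= w v v' + lam v v' * x v'.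

Definition eq_holds (x : V -> R) (v v' : V) : Prop :=
  x v = w v v' + lam v v' * x v'.

Definition solves_H (x : V -> R) : Prop :=
  forall v v', E v v' -> ineq_holds x v v'.

Definition basis_valuation (nu : V -> R) : Prop :=
  solves_H nu /\
  exists B : {set V * V},
    [/\ forall e, e \in B -> E e.1 e.2,
        #|B| = #|V|,
        forall e, e \in B -> eq_holds nu e.1 e.2 &
        forall x, (forall e, e \in B -> eq_holds x e.1 e.2) -> x = nu].

Definition offset (x : V -> R) (v v' : V) : R :=
  if isMax v then x v - (w v v' + lam v v' * x v')
  else (w v v' + lam v v' * x v') - x v.

Definition f_ (s : V -> V) (x : V -> R) : R := \sum_(v : V) offset x v (s v).

Definition stale (s : V -> V) (nu : V -> R) (v v' : V) : Prop :=
  E v v' /\ offset nu v v' = offset nu v (s v).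

Definition tight_edge (nu : V -> R) (v v' : V) : Prop :=
  E v v' /\ offset nu v v' = 0.

Definition defines_strategies (x : V -> R) : Prop :=
  forall v, exists v', E v v' /\ eq_holds x v v'.

(* min { f_s(x) | x solves H }, rendered as the infimum (the minimum exists
   by LP theory whenever the game is well formed and H is feasible) *)
Definition minval (s : V -> V) : R := inf [set f_ s x | x in solves_H].

Definition better (s' s : V -> V) : Prop := minval s' < minval s.

End Game.

(* Main.v *)
Require Import Defs.
From HB Require Import structures.
From mathcomp Require Import all_boot all_order all_algebra.
From mathcomp Require Import boolp classical_sets reals.
From mathcomp Require Import functions interval_inference topology normedtype sequences matrix_normedtype complete_normed_module.
From mathcomp Require Import ring lra.
Require Import Defs.
Import Order.TTheory GRing.Theory Num.Theory.
Local Open Scope ring_scope.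

HB.instance Definition _ (R : realType) (n : nat) := Complete.on 'rV[R]_n.

Lemma fixpt (R : realType) (n : nat) (f : 'rV[R]_n -> 'rV[R]_n) (q : R) :
  0 <= q -> q < 1 -> (forall y z, `|f y - f z| <= q * `|y - z|) ->
  exists p, p = f p.
Proof.
move=> q0 q1 Hf.
have ctr : is_contraction (totalfun f : {fun [set: 'rV[R]_n] >-> [set: 'rV[R]_n]}).
  exists (NngNum q0); split => //.
  move=> -[y z] _ /=; exact: Hf.
have [|p _ Hp] := @banach_fixed_point R 'rV[R]_n setT _ ctr closedT.
  by exists 0.
by exists p.
Qed.

Lemma rv_entry_le (R : realType) (n : nat) (y : 'rV[R]_n) i : `|y ord0 i| <= `|y|.
Proof.
rewrite [X in _ <= X]/Num.norm /= mx_normrE.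
exact: (le_bigmax _ (fun ij : 'I_1 * 'I_n => `|y ij.1 ij.2|) (ord0, i)).
Qed.

Lemma rv_le (R : realType) (n : nat) (y : 'rV[R]_n) N :
  0 <= N -> (forall i, `|y ord0 i| <= N) -> `|y| <= N.
Proof.
move=> N0 H; rewrite [X in X <= _]/Num.norm /= mx_normrE.
apply: bigmax_le => // -[i j] _ /=.
by rewrite (ord1 i).
Qed.


Section Aux.
Variables (R : realType) (V : finType) (isMax : pred V) (P : rel V)
  (tau : V -> V) (c : V -> R) (lam : V -> V -> R) (q : R).
Hypothesis q0 : 0 <= q.
Hypothesis q1 : q < 1.
Hypothesis hlam : forall v v', P v v' || (v' == tau v) -> 0 <= lam v v' <= q.

Definition phi (g : V -> R) (v : V) : R :=
  match [pick v' | P v v'] with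
  | Some i0 => if isMax v then
      let a := [arg max_(j > i0 | P v j) (lam v j * g j)%R]%O in lam v a * g a
    else let a := [arg min_(j < i0 | P v j) (lam v j * g j)%R]%O in lam v a * g a
  | None => c v + lam v (tau v) * g (tau v)
  end.

Lemma phi_lip g h N : (forall u, `|g u - h u| <= N) ->
  forall v, `|phi g v - phi h v| <= q * N.
Proof.
move=> HN v.
have N0 : 0 <= N by apply: le_trans (HN v).
have key : forall j, P v j || (j == tau v) ->
   `|lam v j * g j - lam v j * h j| <= q * N.
  move=> j /hlam /andP[l0 lq].
  rewrite -mulrBr normrM ger0_norm //.
  apply: le_trans (ler_wpM2r N0 lq).
  by rewrite ler_wpM2l // HN.
rewrite /phi; case: pickP => [i0 Hi0 | Hn]; last first.
  by rewrite opprD addrACA subrr add0r; apply: key; rewrite eqxx orbT.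
case: ifP => _.
  case: arg_maxP => // a Pa Ha; case: arg_maxP => // b Pb Hb.
  have k1 := key a; have k2 := key b; rewrite Pa Pb /= in k1 k2.
  have H1 : lam v b * g b <= lam v a * g a := Ha b Pb.
  have H2 : lam v a * h a <= lam v b * h b := Hb a Pa.
  move: (k1 isT) (k2 isT); rewrite !ler_norml.
  move=> /andP[? ?] /andP[? ?]; apply/andP; split; lra.
case: arg_minP => // a Pa Ha; case: arg_minP => // b Pb Hb.
have k1 := key a; have k2 := key b; rewrite Pa Pb /= in k1 k2.
have H1 : lam v a * g a <= lam v b * g b := Ha b Pb.
have H2 : lam v b * h b <= lam v a * h a := Hb a Pa.
move: (k1 isT) (k2 isT); rewrite !ler_norml.
move=> /andP[? ?] /andP[? ?]; apply/andP; split; lra.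
Qed.

Lemma aux_fix : exists d : V -> R, forall v, d v = phi d v.
Proof.
pose F (y : 'rV[R]_#|V|) : 'rV[R]_#|V| :=
  \row_i phi (fun u => y ord0 (enum_rank u)) (enum_val i).
have [p Hp] : exists p, p = F p.
  apply: (@fixpt R _ F q q0 q1) => y z.
  apply: rv_le; first by rewrite mulr_ge0.
  move=> i; rewrite !mxE.
  apply: phi_lip => u.
  have := @rv_entry_le R _ (y - z) (enum_rank u).
  by rewrite !mxE.
exists (fun u => p ord0 (enum_rank u)) => v.
by rewrite {1}Hp mxE enum_rankK.
Qed.

Lemma aux_spec : exists d : V -> R, forall v,
  if [exists v', P v v'] then
    (forall v', P v v' -> if isMax v then lam v v' * d v' <= d v
                          else d v <= lam v v' * d v') /\
    (exists2 v', P v v' & d v = lam v v' * d v')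
  else d v = c v + lam v (tau v) * d (tau v).
Proof.
have [d Hd] := aux_fix; exists d => v.
have := Hd v; rewrite /phi; case: pickP => [i0 Hi0 | Hn].
  have -> : [exists v', P v v'] by apply/existsP; exists i0.
  case: ifP => _.
    case: arg_maxP => // a Pa Ha ->; split; last by exists a.
    by move=> v' /Ha.
  case: arg_minP => // a Pa Ha ->; split; last by exists a.
  by move=> v' /Ha.
have -> // : [exists v', P v v'] = false.
by apply/negbTE/existsP => -[x]; rewrite Hn.
Qed.
End Aux.


Section Main.
Variables (R : realType) (V : finType) (isMax : pred V) (E : rel V)
    (w lam : V -> V -> R).

Lemma ineq_off x v v' : ineq_holds isMax w lam x v v' <-> 0 <= offset isMax w lam x v v'.
Proof. by rewrite /ineq_holds /offset; case: (isMax v); rewrite subr_ge0. Qed.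

Lemma eq_off x v v' : offset isMax w lam x v v' = 0 -> Defs.eq_holds w lam x v v'.
Proof.
rewrite /Defs.eq_holds /offset; case: (isMax v) => /eqP; rewrite subr_eq0 => /eqP //.
Qed.

Definition Dd (d : V -> R) v v' :=
  if isMax v then d v - lam v v' * d v' else lam v v' * d v' - d v.

Lemma offx nu d t v v' :
  offset isMax w lam (fun u => nu u + t * d u) v v' =
  offset isMax w lam nu v v' + t * Dd d v v'.
Proof. by rewrite /offset /Dd; case: (isMax v) => /=; ring. Qed.
End Main.
Arguments Dd {R V} isMax lam d v v'.
Arguments ineq_off {R V isMax w lam x v v'}.
Arguments eq_off {R V isMax w lam x v v'}.
Arguments offx {R V isMax w lam nu d t v v'}.

Theorem lemma4p3 (R : realType) (V : finType) (isMax : pred V) (E : rel V)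
    (w lam : V -> V -> R)
    (Hgame : game_ok E lam)
    (sigma : V -> V) (Hsigma : joint_strategy E sigma)
    (nu : V -> R)
    (Hbasis : basis_valuation isMax E w lam nu)
    (Hmin : forall x, solves_H isMax E w lam x ->
              f_ isMax w lam sigma nu <= f_ isMax w lam sigma x)
    (Hnoloc : forall v v', E v v' ->
              offset isMax w lam nu v (sigma v) <= offset isMax w lam nu v v')
    (E' : rel V)
    (HE'low : forall v v', tight_edge isMax E w lam nu v v' -> E' v v')
    (HE'up : forall v v', E' v v' -> stale isMax E w lam sigma nu v v')
    (HE'out : forall v, exists v', E' v v')
    (Hnodef : ~ defines_strategies E w lam nu) :
  exists sigma' : V -> V,
    [/\ joint_strategy E sigma',
        better isMax E w lam sigma' sigma &
        forall v, E' v (sigma' v)].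
Proof.
pose P := fun v v' => E v v' && (offset isMax w lam nu v v' == 0).
pose tau v := odflt v [pick v' | E' v v'].
have Etau v : E' v (tau v).
  rewrite /tau; case: pickP => [//|H].
  by have [v' Hv'] := HE'out v; move: (H v'); rewrite Hv'.
have E'E v v' : E' v v' -> E v v' by move=> /HE'up [].
pose q := \big[Num.max/0]_(p : V * V | E p.1 p.2) lam p.1 p.2.
have q0 : 0 <= q by apply: bigmax_ge_id.
have q1 : q < 1.
  by apply: bigmax_lt => //= p Ep; have [] := Hgame.2 _ _ Ep.
have hlam v v' : P v v' || (v' == tau v) -> 0 <= lam v v' <= q.
  move=> H.
  have Ev : E v v' by case/orP: H => [/andP[]//|/eqP ->]; exact: E'E.
  have [-> _] := Hgame.2 _ _ Ev.
  exact: (le_bigmax_cond _ (P := fun p : V * V => E p.1 p.2) (j := (v, v'))).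
pose c v : R := if isMax v then -1 else 1.
have [d Hd] := @aux_spec R V isMax P tau c lam q q0 q1 hlam.
pose sig' v := odflt (tau v) [pick v' | P v v' && (d v == lam v v' * d v')].
have HE'sig v : E' v (sig' v).
  rewrite /sig'; case: pickP => [v' /andP[/andP[Ev Hoff] _] | _] /=; last exact: Etau.
  by apply: HE'low; split => //; exact/eqP.
have Hjs : joint_strategy E sig' by move=> v; apply: E'E; exact: HE'sig.
have DdP v v' : P v v' -> 0 <= Dd isMax lam d v v'.
  move=> Pv; have := Hd v.
  have -> : [exists v', P v v'] by apply/existsP; exists v'.
  move=> [/(_ v' Pv) H _]; rewrite /Dd.
  by case: (isMax v) H; rewrite subr_ge0.
have Dsig v : Dd isMax lam d v (sig' v) = if [exists v', P v v'] then 0 else -1.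
  have := Hd v; case Hex: [exists v', P v v'].
    move=> [_ [a Pa Ha]]; rewrite /sig'; case: pickP => [b /andP[Pb /eqP Hb] | Hn] /=.
      by rewrite /Dd Hb; case: (isMax v); rewrite subrr.
    by move: (Hn a); rewrite Pa Ha eqxx.
  move=> Hdv; rewrite /sig'; case: pickP => [b /andP[Pb _] | _] /=.
    by move: Hex; have -> // : [exists v', P v v'] by apply/existsP; exists b.
  by rewrite /Dd Hdv /c; case: (isMax v); ring.
have [v0 Hv0] : exists v0, ~~ [exists v', P v0 v'].
  case: (boolP [exists v0, ~~ [exists v', P v0 v']]) => [/existsP // | Hall].
  exfalso; apply: Hnodef => v; move: Hall; rewrite negb_exists => /forallP /(_ v).
  rewrite negbK => /existsP [v' /andP [Ev /eqP Ho]].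
  by exists v'; split => //; apply: (eq_off Ho).
have Hsum : \sum_v Dd isMax lam d v (sig' v) < 0.
  rewrite (bigD1 v0) //= Dsig (negbTE Hv0).
  have : \sum_(i | i != v0) Dd isMax lam d i (sig' i) <= 0.
    by apply: sumr_le0 => i _; rewrite Dsig; case: ifP => _ //; rewrite lerN10.
  lra.
have Hsol := Hbasis.1.
have off_ge0 v v' : E v v' -> 0 <= offset isMax w lam nu v v'.
  by move=> Ev; apply/ineq_off; exact: Hsol.
pose S := \sum_(p : V * V | E p.1 p.2 && (offset isMax w lam nu p.1 p.2 != 0))
            `|Dd isMax lam d p.1 p.2| / offset isMax w lam nu p.1 p.2.
have S0 : 0 <= S.
  by apply: sumr_ge0 => p /andP[Ep _]; rewrite divr_ge0 // off_ge0.
have Sterm v v' : E v v' -> offset isMax w lam nu v v' != 0 ->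
    `|Dd isMax lam d v v'| / offset isMax w lam nu v v' <= S.
  move=> Ev Ho; rewrite /S (bigD1 (v, v')) /=; last by rewrite Ev Ho.
  rewrite lerDl; apply: sumr_ge0 => p /andP[/andP[Ep _] _].
  by rewrite divr_ge0 // off_ge0.
pose t := (1 + S)^-1.
have t0 : 0 < t by rewrite invr_gt0; lra.
have tS : t * (1 + S) = 1 by rewrite mulVf //; apply/eqP; lra.
pose x := fun u => nu u + t * d u.
have Hx : solves_H isMax E w lam x.
  move=> v v' Ev; apply/ineq_off; rewrite offx.
  have [Ho|Ho] := eqVneq (offset isMax w lam nu v v') 0.
    rewrite Ho add0r; apply: mulr_ge0; first exact: ltW.
    by apply: DdP; rewrite /P Ev Ho eqxx.
  have Hpos : 0 < offset isMax w lam nu v v' by rewrite lt_neqAle eq_sym Ho off_ge0.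
  have := Sterm v v' Ev Ho; rewrite ler_pdivrMr // => h1.
  set o := offset isMax w lam nu v v' in Hpos h1 *.
  set D := Dd isMax lam d v v' in h1 *.
  have h2 : `|D| <= (1 + S) * o by nra.
  have h3 : t * `|D| <= t * ((1 + S) * o) by rewrite ler_wpM2l // ltW.
  rewrite mulrA tS mul1r in h3.
  have h4 : - D <= `|D| by rewrite -normrN ler_norm.
  have h5 : t * (- D) <= t * `|D| by rewrite ler_wpM2l // ltW.
  lra.
have fx : f_ isMax w lam sig' x =
    f_ isMax w lam sig' nu + t * \sum_v Dd isMax lam d v (sig' v).
  rewrite /f_; under eq_bigr => v _ do rewrite offx.
  by rewrite big_split /= mulr_sumr.
have fnu : f_ isMax w lam sig' nu = f_ isMax w lam sigma nu.
  by apply: eq_bigr => v _; have [] := HE'up _ _ (HE'sig v).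
exists sig'; split => //.
rewrite /better /minval.
have L1 : inf [set f_ isMax w lam sig' y | y in solves_H isMax E w lam] <=
          f_ isMax w lam sig' x.
  apply: ge_inf; last by exists x.
  exists 0 => _ [y Hy <-]; apply: sumr_ge0 => v _.
  by apply/ineq_off; apply: Hy; exact: Hjs.
have L2 : f_ isMax w lam sigma nu <=
          inf [set f_ isMax w lam sigma y | y in solves_H isMax E w lam].
  apply: lb_le_inf; first by exists (f_ isMax w lam sigma nu); exists nu.
  by move=> _ [y Hy <-]; exact: Hmin.
have : t * \sum_v Dd isMax lam d v (sig' v) < 0 by rewrite pmulr_rlt0.
lra.
Qed.
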